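(* Let $-1<r<1$ and $\nu=5$ (sample size $n=6$). The posterior density of the scale-invariant slope under the Cauchy prior, $$p(\tilde\beta\mid y)=\frac{p_C(\tilde\beta)J(\tilde\beta,5,r,1)}{\int_{-\infty}^\infty p_C(x)J(x,5,r,1)\,dx},\qquad p_C(x)=\frac1\pi\frac1{1+x^2},$$ equals $$p(\tilde\beta\mid y)=K(r)\,\frac{1}{1+\tilde\beta^2}\cdot\frac{|\tilde\beta|(\tilde\beta^2-r\tilde\beta+1)}{(\tilde\beta^2-2r\tilde\beta+1)^2},\qquad K(r)={}_2F_1(2,1;\tfrac32;r^2)^{-1}.$$
   Context: Functions: $p_t(t;\nu)$ Student $t$ density; $P_F(x;\nu_1,\nu_2)$ $F$ distribution function; for $\nu>1$, $-1<r<1$, $\tilde\beta>0$: $t_-(\nu,r)=-\sqrt{\nu}\,r/\sqrt{1-r^2}$, $t_+(\tilde\beta,\nu,r)=\sqrt{\nu}(\tilde\beta-r)/\sqrt{1-r^2}$, $F(t,\tilde\beta,\nu,r)=\frac{\nu-1}{\nu+1}\frac{\nu+t^2}{[t_+-t_-]^2-[t-t_-]^2}$, $I(\tilde\beta,\nu,r)=\int_{t_-}^{t_+}p_t(t;\nu)P_F(F(t,\tilde\beta,\nu,r);\nu+1,\nu-1)\,dt$, and for $\beta\ne0$, $l>0$: $J(\beta,\nu,r,l)=I(|\beta|/l,\nu,r\,\mathrm{sign}\beta)+I(l/|\beta|,\nu,r\,\mathrm{sign}\beta)$. ${}_2F_1$ is the Gauss hypergeometric function. *)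

(* Defs.v *)
From Stdlib Require Import Reals Lra Arith ClassicalEpsilon.
Open Scope R_scope.

Definition the_val (P : R -> Prop) : R :=
  match excluded_middle_informative (exists v, P v) with
  | left h => proj1_sig (constructive_indefinite_description P h)
  | right _ => 0
  end.

Definition is_RInt (f : R -> R) (a b v : R) : Prop :=
  exists pr : Riemann_integrable f a b, RiemannInt pr = v.
Definition RInt (f : R -> R) (a b : R) : R := the_val (is_RInt f a b).

Definition is_improper_left (f : R -> R) (a b v : R) : Prop :=
  forall eps, 0 < eps -> exists d, 0 < d /\
    forall e, 0 < e < d -> exists w, is_RInt f (a + e) b w /\ Rabs (w - v) < eps.

Definition is_improper_0inf (f : R -> R) (v : R) : Prop :=
  forall eps, 0 < eps -> exists d M0, 0 < d /\
    forall e M, 0 < e < d -> M0 < M ->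
      exists w, is_RInt f e M w /\ Rabs (w - v) < eps.

Definition is_improper_R (f : R -> R) (v : R) : Prop :=
  forall eps, 0 < eps -> exists d M0, 0 < d /\
    forall e M, 0 < e < d -> M0 < M ->
      exists w1 w2, is_RInt f (- M) (- e) w1 /\ is_RInt f e M w2 /\
                    Rabs (w1 + w2 - v) < eps.

Definition Gamma (x : R) : R :=
  the_val (is_improper_0inf (fun t => Rpower t (x - 1) * exp (- t))).

Definition p_t (t nu : R) : R :=
  Gamma ((nu + 1) / 2) / (sqrt (nu * PI) * Gamma (nu / 2)) *
  Rpower (1 + t ^ 2 / nu) (- (nu + 1) / 2).

Definition p_F (s d1 d2 : R) : R :=
  Gamma ((d1 + d2) / 2) / (Gamma (d1 / 2) * Gamma (d2 / 2)) *
  Rpower (d1 / d2) (d1 / 2) * Rpower s (d1 / 2 - 1) *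
  Rpower (1 + d1 * s / d2) (- (d1 + d2) / 2).

Definition P_F (x d1 d2 : R) : R :=
  if Rlt_dec 0 x then the_val (is_improper_left (fun s => p_F s d1 d2) 0 x) else 0.

Definition t_minus (nu r : R) : R := - sqrt nu * r / sqrt (1 - r ^ 2).
Definition t_plus (bt nu r : R) : R := sqrt nu * (bt - r) / sqrt (1 - r ^ 2).

Definition Ffun (t bt nu r : R) : R :=
  (nu - 1) / (nu + 1) * (nu + t ^ 2) /
  ((t_plus bt nu r - t_minus nu r) ^ 2 - (t - t_minus nu r) ^ 2).

Definition Ifun (bt nu r : R) : R :=
  RInt (fun t => p_t t nu * P_F (Ffun t bt nu r) (nu + 1) (nu - 1))
       (t_minus nu r) (t_plus bt nu r).

Definition sgn (x : R) : R := if Rlt_dec 0 x then 1 else if Rlt_dec x 0 then -1 else 0.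

Definition Jfun (b nu r l : R) : R :=
  Ifun (Rabs b / l) nu (r * sgn b) + Ifun (l / Rabs b) nu (r * sgn b).

Definition p_C (x : R) : R := / PI * / (1 + x ^ 2).

Definition posterior5 (r b : R) : R :=
  p_C b * Jfun b 5 r 1 / the_val (is_improper_R (fun x => p_C x * Jfun x 5 r 1)).

Fixpoint poch (a : R) (n : nat) : R :=
  match n with O => 1 | S k => poch a k * (a + INR k) end.

Definition hyp2F1 (a b c z : R) : R :=
  the_val (infinite_sum (fun n => poch a n * poch b n / (poch c n * INR (Factorial.fact n)) * z ^ n)).

(* Main.v *)
Require Import Defs.
From Stdlib Require Import Reals Lra Lia ClassicalEpsilon.
From Coquelicot Require Import Coquelicot.
Open Scope R_scope.

Lemma the_val_eq (P : R -> Prop) v : P v -> (forall w, P w -> w = v) -> the_val P = v.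
Proof.
  intros Hv Hu. unfold the_val.
  destruct (excluded_middle_informative _) as [h|h].
  - destruct (constructive_indefinite_description P h) as [x Hx]. simpl. now apply Hu.
  - exfalso. apply h. now exists v.
Qed.

Lemma bridge f a b v : is_RInt f a b v -> Defs.is_RInt f a b v.
Proof.
  intros H. assert (E : ex_RInt f a b) by (exists v; exact H).
  exists (ex_RInt_Reals_0 f a b E).
  rewrite <- RInt_Reals. now apply is_RInt_unique.
Qed.

Lemma defs_is_RInt_uniq f a b v w : Defs.is_RInt f a b v -> Defs.is_RInt f a b w -> v = w.
Proof.
  intros [p1 H1] [p2 H2]. subst. apply RiemannInt_P5.
Qed.

Lemma defs_RInt_eq f a b v : is_RInt f a b v -> Defs.RInt f a b = v.
Proof.
  intros H. unfold Defs.RInt. apply the_val_eq. now apply bridge.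
  intros w Hw. eapply defs_is_RInt_uniq. exact Hw. now apply bridge.
Qed.

Lemma exRc (f : R -> R) a b : (forall z, Rmin a b <= z <= Rmax a b -> continuous f z) -> ex_RInt f a b.
Proof. intros H. apply (ex_RInt_continuous (V := R_CompleteNormedModule)). exact H. Qed.

Lemma RIc (f : R -> R) a b : ex_RInt f a b -> is_RInt f a b (RInt f a b).
Proof. intros H. apply (RInt_correct (V := R_CompleteNormedModule)). exact H. Qed.

Lemma exdc (f : R -> R) x : ex_derive f x -> continuous f x.
Proof. intros H. apply (ex_derive_continuous (K := R_AbsRing) (V := R_NormedModule)). exact H. Qed.

Lemma RIder (f df : R -> R) a b :
  (forall x, Rmin a b <= x <= Rmax a b -> is_derive f x (df x)) ->
  (forall x, Rmin a b <= x <= Rmax a b -> continuous df x) ->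
  is_RInt df a b (f b - f a).
Proof. intros H1 H2. apply (is_RInt_derive (V := R_CompleteNormedModule)); auto. Qed.

Ltac nz := repeat split; repeat (first [apply Rmult_integral_contrapositive_currified | apply pow_nonzero | lra | nra]).

Lemma one_m_r2 r : -1 < r < 1 -> 0 < 1 - r^2.
Proof. intros H. assert (0 < (1 - r) * (1 + r)) by (apply Rmult_lt_0_compat; lra). nra. Qed.

Lemma RIuniq (f : R -> R) a b l1 l2 : is_RInt f a b l1 -> is_RInt f a b l2 -> l1 = l2.
Proof.
  intros H1 H2. rewrite <- (is_RInt_unique (V := R_CompleteNormedModule) f a b l1 H1).
  apply (is_RInt_unique (V := R_CompleteNormedModule)). exact H2.
Qed.

Lemma RIcomp (f : R -> R) (g dg : R -> R) a b :
  (forall x, Rmin a b <= x <= Rmax a b -> continuous f (g x)) ->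
  (forall x, Rmin a b <= x <= Rmax a b -> is_derive g x (dg x) /\ continuous dg x) ->
  is_RInt (fun y => dg y * f (g y)) a b (RInt f (g a) (g b)).
Proof. intros H1 H2. apply (is_RInt_comp (V := R_CompleteNormedModule)); auto. Qed.

Lemma RIscal (f : R -> R) a b k l : is_RInt f a b l -> is_RInt (fun y => k * f y) a b (k * l).
Proof. intros H. apply (is_RInt_scal (V := R_NormedModule)). exact H. Qed.

Lemma RIplus (f g : R -> R) a b l1 l2 : is_RInt f a b l1 -> is_RInt g a b l2 ->
  is_RInt (fun y => f y + g y) a b (l1 + l2).
Proof. intros H1 H2. apply (is_RInt_plus (V := R_NormedModule)); auto. Qed.

Lemma RIswap (f : R -> R) a b l : is_RInt f b a l -> is_RInt f a b (- l).
Proof. intros H. apply (is_RInt_swap (V := R_NormedModule)). exact H. Qed.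

Lemma RIchasles (f : R -> R) a b c l1 l2 : is_RInt f a b l1 -> is_RInt f b c l2 -> is_RInt f a c (l1 + l2).
Proof. intros H1 H2. apply (is_RInt_Chasles (V := R_NormedModule) f a b c l1 l2); auto. Qed.

Lemma RIext (f g : R -> R) a b l : (forall x, Rmin a b < x < Rmax a b -> f x = g x) -> is_RInt f a b l -> is_RInt g a b l.
Proof. intros H1 H2. apply (is_RInt_ext (V := R_NormedModule) f g); auto. Qed.

Lemma RChasles (f : R -> R) a b c : ex_RInt f a b -> ex_RInt f b c -> RInt f a b + RInt f b c = RInt f a c.
Proof. intros H1 H2. apply (RInt_Chasles (V := R_CompleteNormedModule)); auto. Qed.

Lemma RIopp_sub (f : R -> R) a b l : is_RInt f a b l -> is_RInt (fun y => f (- y)) (- b) (- a) l.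
Proof.
  intros H. apply RIswap in H. apply (RIscal _ _ _ (-1)) in H.
  assert (H' : is_RInt (fun y => -1 * f y) (- - b) (- - a) (-1 * - l)) by (rewrite !Ropp_involutive; exact H).
  pose proof (is_RInt_comp_opp (V := R_NormedModule) _ _ _ _ H') as H2.
  replace l with (-1 * - l) by ring. apply RIext with (2 := H2).
  intros x _. unfold opp; simpl. ring.
Qed.

Ltac toR := match goal with |- ?a = ?b => change (@eq R a b) end.

Lemma RIabs_le (f : R -> R) a b l M : a <= b -> (forall x, a <= x <= b -> Rabs (f x) <= M) ->
  is_RInt f a b l -> Rabs l <= (b - a) * M.
Proof. intros H1 H2 H3. apply (norm_RInt_le_const (V := R_NormedModule) f a b l M); auto. Qed.

Lemma eps_zero x : (forall eps, 0 < eps -> Rabs x < eps) -> x = 0.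
Proof.
  intros H. destruct (Req_dec x 0) as [h|h]; auto.
  assert (0 < Rabs x) by (apply Rabs_pos_lt; auto).
  specialize (H (Rabs x) H0). lra.
Qed.

Lemma improper_0inf_uniq f v1 v2 :
  is_improper_0inf f v1 -> is_improper_0inf f v2 -> v1 = v2.
Proof.
  intros H1 H2. apply Rminus_diag_uniq. apply eps_zero. intros eps Heps.
  destruct (H1 (eps/2)) as [d1 [M1 [Hd1 K1]]]; [lra|].
  destruct (H2 (eps/2)) as [d2 [M2 [Hd2 K2]]]; [lra|].
  set (e := Rmin d1 d2 / 2). set (M := Rmax M1 M2 + 1).
  assert (He : 0 < Rmin d1 d2) by (apply Rmin_pos; auto).
  assert (e1 : 0 < e < d1) by (unfold e; split; [lra|]; pose proof (Rmin_l d1 d2); lra).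
  assert (e2 : 0 < e < d2) by (unfold e; split; [lra|]; pose proof (Rmin_r d1 d2); lra).
  assert (m1 : M1 < M) by (unfold M; pose proof (Rmax_l M1 M2); lra).
  assert (m2 : M2 < M) by (unfold M; pose proof (Rmax_r M1 M2); lra).
  destruct (K1 e M e1 m1) as [w1 [I1 A1]]. destruct (K2 e M e2 m2) as [w2 [I2 A2]].
  rewrite (defs_is_RInt_uniq _ _ _ _ _ I1 I2) in A1.
  replace (v1 - v2) with ((w2 - v2) - (w2 - v1)) by ring.
  eapply Rle_lt_trans. apply Rabs_triang. rewrite Rabs_Ropp. lra.
Qed.

Lemma lub_approx E L eps : is_lub E L -> 0 < eps -> exists y, E y /\ L - eps < y.
Proof.
  intros [Hub Hl] Heps. apply NNPP. intros Hn.
  assert (L <= L - eps); [|lra]. apply Hl. intros y Hy.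
  destruct (Rle_lt_dec y (L - eps)); auto. exfalso. apply Hn. exists y. auto.
Qed.

Lemma improper_0inf_of_bounded (f : R -> R) :
  (forall t, 0 < t -> continuous f t) -> (forall t, 0 < t -> 0 <= f t) ->
  (forall e, 0 < e <= 1 -> RInt f e 1 <= 1) ->
  (exists B, forall M, 1 <= M -> RInt f 1 M <= B) ->
  exists v, is_improper_0inf f v /\ RInt f 1 2 <= v.
Proof.
  intros Hc Hp B0 [B1 HB1].
  assert (Ex : forall a b, 0 < a <= b -> ex_RInt f a b).
  { intros a b Hab. apply exRc. intros z Hz.
    rewrite Rmin_left in Hz by lra. apply Hc. lra. }
  assert (Mono : forall a b c, 0 < a <= b -> b <= c -> RInt f a b <= RInt f a c).
  { intros a b c H1 H2. rewrite <- (RInt_Chasles f a b c) by (apply Ex; lra).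
    assert (0 <= RInt f b c). { apply RInt_ge_0. lra. apply Ex; lra.
    intros; apply Hp; lra. } unfold plus; simpl. lra. }
  assert (Mono2 : forall a b c, 0 < a <= b -> b <= c -> RInt f b c <= RInt f a c).
  { intros a b c H1 H2. rewrite <- (RInt_Chasles f a b c) by (apply Ex; lra).
    assert (0 <= RInt f a b). { apply RInt_ge_0. lra. apply Ex; lra.
    intros; apply Hp; lra. } unfold plus; simpl. lra. }
  set (E1 := fun y => exists M, 1 <= M /\ y = RInt f 1 M).
  set (E0 := fun y => exists e, 0 < e <= 1 /\ y = RInt f e 1).
  destruct (completeness E1) as [L1 HL1].
  { exists B1. intros y [M [HM ->]]. auto. }
  { exists (RInt f 1 1). exists 1. split; auto; lra. }
  destruct (completeness E0) as [L0 HL0].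
  { exists 1. intros y [e [He ->]]. auto. }
  { exists (RInt f 1 1). exists 1. split; auto; lra. }
  exists (L0 + L1). split.
  - intros eps Heps.
    destruct (lub_approx E1 L1 (eps/2) HL1) as [y1 [[M1 [HM1 ->]] A1]]; [lra|].
    destruct (lub_approx E0 L0 (eps/2) HL0) as [y0 [[e1 [He1 ->]] A0]]; [lra|].
    exists e1, M1. split; [lra|]. intros e M He HM.
    exists (RInt f e M). split.
    + apply bridge. apply RIc. apply Ex; lra.
    + rewrite <- (RInt_Chasles f e 1 M) by (apply Ex; lra). unfold plus; simpl.
      assert (RInt f e 1 <= L0) by (apply HL0; exists e; split; auto; lra).
      assert (RInt f 1 M <= L1) by (apply HL1; exists M; split; auto; lra).
      assert (RInt f e1 1 <= RInt f e 1) by (apply Mono2; lra).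
      assert (RInt f 1 M1 <= RInt f 1 M) by (apply Mono; lra).
      apply Rabs_def1; lra.
  - assert (RInt f 1 2 <= L1) by (apply HL1; exists 2; split; auto; lra).
    assert (0 <= RInt f (1/2) 1). apply RInt_ge_0. lra. apply Ex; lra. intros; apply Hp; lra.
    assert (RInt f (1/2) 1 <= L0) by (apply HL0; exists (1/2); split; auto; lra).
    lra.
Qed.

Definition gf (a t : R) := Rpower t a * exp (- t).

Lemma Gamma_pos x : 1 <= x <= 5 -> 0 < Gamma x.
Proof.
  intros Hx. set (a := x - 1).
  assert (Ha : 0 <= a <= 4) by (unfold a; lra).
  assert (Hc : forall t, 0 < t -> continuous (gf a) t).
  { intros t Ht. apply exdc. unfold gf, Rpower. auto_derive. auto. }
  assert (Hp : forall t, 0 < t -> 0 <= gf a t).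
  { intros t Ht. unfold gf, Rpower. pose proof (exp_pos (a * ln t)); pose proof (exp_pos (-t)); nra. }
  destruct (improper_0inf_of_bounded (gf a) Hc Hp) as [v [Hv Hlow]].
  - intros e He. 
    assert (E : ex_RInt (gf a) e 1).
    { apply exRc. intros z Hz. rewrite Rmin_left in Hz by lra. apply Hc. lra. }
    apply Rle_trans with (RInt (fun _ => 1) e 1).
    + apply RInt_le; auto. lra. apply ex_RInt_const. intros t Ht.
      unfold gf, Rpower.
      assert (ln t <= 0). { rewrite <- ln_1. destruct (Req_dec t 1). subst; lra. left; apply ln_increasing; lra. }
      assert (exp (a * ln t) <= 1). { rewrite <- exp_0. destruct (Req_dec (a * ln t) 0) as [h|h]. rewrite h; lra. left. apply exp_increasing. nra. }
      assert (exp (- t) <= 1). { rewrite <- exp_0. left. apply exp_increasing. lra. }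
      pose proof (exp_pos (a * ln t)); pose proof (exp_pos (-t)). nra.
    + rewrite RInt_const. unfold scal; simpl; unfold mult; simpl. lra.
  - exists 65. intros M HM.
    set (P := fun t => - (t^4 + 4*t^3 + 12*t^2 + 24*t + 24) * exp (-t)).
    assert (D : is_RInt (fun t => t^4 * exp (-t)) 1 M (P M - P 1)).
    { apply RIder.
      - intros t _. unfold P. auto_derive. auto. ring.
      - intros t _. apply exdc. auto_derive. auto. }
    apply Rle_trans with (P M - P 1).
    + apply (is_RInt_le (gf a) (fun t => t^4 * exp (-t)) 1 M); auto.
      apply RIc. apply exRc. intros z Hz. rewrite Rmin_left in Hz by lra. apply Hc. lra.
      intros t Ht. unfold gf. apply Rmult_le_compat_r. left; apply exp_pos.
      rewrite <- (Rpower_pow 4 t) by lra. apply Rle_Rpower. lra. simpl; lra.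
    + unfold P.
      assert (0 <= (M^4 + 4*M^3 + 12*M^2 + 24*M + 24) * exp (-M)).
      { apply Rmult_le_pos. nra. left; apply exp_pos. }
      assert (exp (- (1)) <= 1). { assert (exp (- (1)) < exp 0) by (apply exp_increasing; lra). rewrite exp_0 in H0. lra. }
      pose proof (exp_pos (- (1))).
      assert (E : (1^4 + 4*1^3 + 12*1^2 + 24*1 + 24) = 65) by ring. rewrite E. lra.
  - assert (Gamma x = v).
    { unfold Gamma. apply the_val_eq. replace (x - 1) with a by reflexivity. exact Hv.
      intros w Hw. eapply improper_0inf_uniq. exact Hw. exact Hv. }
    rewrite H. eapply Rlt_le_trans; [|exact Hlow].
    apply Rlt_le_trans with (RInt (fun _ => exp (-2)) 1 2).
    + rewrite RInt_const. unfold scal; simpl; unfold mult; simpl. pose proof (exp_pos (-2)). lra.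
    + apply RInt_le. lra. apply ex_RInt_const.
      apply exRc. intros z Hz. rewrite Rmin_left in Hz by lra. apply Hc. lra.
      intros t Ht. unfold gf.
      assert (1 <= Rpower t a). { rewrite <- (Rpower_O t) by lra. apply Rle_Rpower; lra. }
      assert (exp (-2) <= exp (-t)). { left. apply exp_increasing. lra. }
      pose proof (exp_pos (-2)). nra.
Qed.

Lemma improper_left_uniq f a b v1 v2 :
  is_improper_left f a b v1 -> is_improper_left f a b v2 -> v1 = v2.
Proof.
  intros H1 H2. apply Rminus_diag_uniq. apply eps_zero. intros eps Heps.
  destruct (H1 (eps/2)) as [d1 [Hd1 K1]]; [lra|].
  destruct (H2 (eps/2)) as [d2 [Hd2 K2]]; [lra|].
  set (e := Rmin d1 d2 / 2).
  assert (He : 0 < Rmin d1 d2) by (apply Rmin_pos; auto).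
  assert (e1 : 0 < e < d1) by (unfold e; split; [lra|]; pose proof (Rmin_l d1 d2); lra).
  assert (e2 : 0 < e < d2) by (unfold e; split; [lra|]; pose proof (Rmin_r d1 d2); lra).
  destruct (K1 e e1) as [w1 [I1 A1]]. destruct (K2 e e2) as [w2 [I2 A2]].
  rewrite (defs_is_RInt_uniq _ _ _ _ _ I1 I2) in A1.
  replace (v1 - v2) with ((w2 - v2) - (w2 - v1)) by ring.
  eapply Rle_lt_trans. apply Rabs_triang. rewrite Rabs_Ropp. lra.
Qed.

Definition Kf : R := Gamma ((5 + 1 + (5 - 1)) / 2) / (Gamma ((5 + 1) / 2) * Gamma ((5 - 1) / 2)).

Lemma Kf_pos : 0 < Kf.
Proof.
  unfold Kf. assert (0 < Gamma ((5 + 1 + (5 - 1)) / 2)) by (apply Gamma_pos; lra).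
  assert (0 < Gamma ((5 + 1) / 2)) by (apply Gamma_pos; lra).
  assert (0 < Gamma ((5 - 1) / 2)) by (apply Gamma_pos; lra).
  apply Rdiv_lt_0_compat; auto. apply Rmult_lt_0_compat; auto.
Qed.

Lemma pF_eq s : 0 < s -> p_F s (5 + 1) (5 - 1) = Kf * (27/8 * s^2 / (1 + 3/2 * s)^5).
Proof.
  intros Hs. unfold p_F, Kf.
  replace ((5 + 1) / 2) with (INR 3) by (simpl; lra).
  replace (INR 3 - 1) with (INR 2) by (simpl; lra).
  replace (- (5 + 1 + (5 - 1)) / 2) with (- INR 5) by (simpl; lra).
  replace ((5 + 1) / (5 - 1)) with (3/2) by lra.
  replace (1 + (5 + 1) * s / (5 - 1)) with (1 + 3/2 * s) by lra.
  rewrite Rpower_Ropp. rewrite !Rpower_pow by lra.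
  replace (INR 3) with ((5+1)/2) by (simpl; lra).
  assert (0 < Gamma ((5 + 1) / 2)) by (apply Gamma_pos; lra).
  assert (0 < Gamma ((5 - 1) / 2)) by (apply Gamma_pos; lra).
  assert ((1 + 3/2 * s)^5 <> 0) by (apply pow_nonzero; lra).
  field. repeat split; auto; lra.
Qed.

Definition Vf (x : R) := 3/2 * x / (1 + 3/2 * x).
Definition Phi (x : R) := Vf x ^ 3 / 3 - Vf x ^ 4 / 4.

Lemma Phi_deriv x : 0 <= x -> is_derive Phi x (27/8 * x^2 / (1 + 3/2 * x)^5).
Proof.
  intros Hx. unfold Phi, Vf. auto_derive. lra. field. lra.
Qed.

Lemma Phi_small e : 0 <= e <= 1 -> Rabs (Phi e) <= e / 2.
Proof.
  intros He. unfold Phi. set (V := Vf e).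
  assert (HVe : V * (1 + 3/2 * e) = 3/2 * e) by (unfold V, Vf; field; lra).
  assert (HV : 0 <= V <= 1) by (split; nra).
  assert (HV2 : V <= 3/2 * e) by nra.
  assert (0 <= V^3 / 3 - V^4/4 <= V^3/3).
  { assert (0 <= V^3) by (apply pow_le; lra). assert (V^4 <= V^3) by (simpl; nra).
    assert (0 <= V^4) by (apply pow_le; lra). lra. }
  rewrite Rabs_pos_eq by lra.
  assert (V^3 <= V) by (simpl; nra). lra.
Qed.

Lemma PF_improper x : 0 < x -> is_improper_left (fun s => p_F s (5 + 1) (5 - 1)) 0 x (Kf * Phi x).
Proof.
  intros Hx eps Heps. pose proof Kf_pos.
  set (d := Rmin (Rmin x 1) (eps / Kf)).
  assert (0 < eps / Kf) by (apply Rdiv_lt_0_compat; auto).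
  assert (Hd1 : d <= x) by (unfold d; pose proof (Rmin_l (Rmin x 1) (eps/Kf)); pose proof (Rmin_l x 1); lra).
  assert (Hd2 : d <= 1) by (unfold d; pose proof (Rmin_l (Rmin x 1) (eps/Kf)); pose proof (Rmin_r x 1); lra).
  assert (Hd3 : d <= eps / Kf) by (unfold d; apply Rmin_r).
  exists d. split. { unfold d. apply Rmin_pos; auto. apply Rmin_pos; lra. }
  intros e He. exists (Kf * Phi x - Kf * Phi e). split.
  - apply bridge. replace (0 + e) with e by ring.
    apply is_RInt_ext with (fun s => Kf * (27/8 * s^2 / (1 + 3/2 * s)^5)).
    { intros t Ht. rewrite Rmin_left in Ht by lra. rewrite pF_eq; auto. lra. }
    apply (RIder (fun s => Kf * Phi s)).
    + intros t Ht. rewrite Rmin_left in Ht by lra.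
      apply (is_derive_scal Phi). apply Phi_deriv. lra.
    + intros t Ht. rewrite Rmin_left in Ht by lra. apply exdc. auto_derive. nz.
  - replace (Kf * Phi x - Kf * Phi e - Kf * Phi x) with (- (Kf * Phi e)) by ring.
    rewrite Rabs_Ropp, Rabs_mult, (Rabs_pos_eq Kf) by lra.
    pose proof (Phi_small e ltac:(lra)).
    assert (Kf * (e/2) < eps). { assert (Kf * e < Kf * (eps / Kf)) by (apply Rmult_lt_compat_l; lra).
      replace (Kf * (eps / Kf)) with eps in H2 by (field; lra). lra. }
    assert (Kf * Rabs (Phi e) <= Kf * (e/2)) by (apply Rmult_le_compat_l; lra). lra.
Qed.

Lemma PF_eq x : 0 < x -> P_F x (5 + 1) (5 - 1) = Kf * Phi x.
Proof.
  intros Hx. unfold P_F. destruct (Rlt_dec 0 x) as [_|h]; [|lra].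
  apply the_val_eq. apply PF_improper; auto.
  intros w Hw. eapply improper_left_uniq. exact Hw. apply PF_improper; auto.
Qed.

Definition cT : R := Gamma ((5 + 1) / 2) / (sqrt (5 * PI) * Gamma (5 / 2)).

Lemma cT_pos : 0 < cT.
Proof.
  unfold cT. assert (0 < Gamma ((5 + 1) / 2)) by (apply Gamma_pos; lra).
  assert (0 < Gamma (5 / 2)) by (apply Gamma_pos; lra).
  assert (0 < sqrt (5 * PI)) by (apply sqrt_lt_R0; pose proof PI_RGT_0; lra).
  apply Rdiv_lt_0_compat; auto. apply Rmult_lt_0_compat; auto.
Qed.

Lemma pt_eq t : p_t t 5 = cT / (1 + t^2/5)^3.
Proof.
  unfold p_t, cT. replace (- (5 + 1) / 2) with (- INR 3) by (simpl; lra).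
  rewrite Rpower_Ropp, Rpower_pow. unfold Rdiv. ring.
  assert (0 <= t^2) by (apply pow2_ge_0). lra.
Qed.

Definition Pcoef m r v := v*((4*m-3)/(12*m) + (-2*r)*(3*m-2)/(8*m^2)*v + (4*r^2*(3*m-2) - 2*m^2)/(24*m^3)*v^2).

Lemma Pder m r v : 0 < m -> m - 2*r*v <> 0 ->
  is_derive (fun v => Pcoef m r v / (m - 2*r*v)^3) v (1/(3*(m-2*r*v)^3) - (1-2*r*v+v^2)/(4*(m-2*r*v)^4)).
Proof. intros Hm HM. unfold Pcoef. auto_derive. nz. field. split; lra. Qed.

Definition Iclosed bt r :=
  cT * Kf * sqrt 5 * (sqrt (1 - r^2))^5 * Pcoef (bt^2+1) r bt / (bt^2 - 2*r*bt + 1)^3.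

Lemma sq_lemma q s x : q^2 = 5 -> 0 < s -> (q * x / s)^2 = 5 * x^2 / s^2.
Proof. intros hq hs. rewrite <- hq. field. lra. Qed.

Lemma Ifun_eq bt r : 0 < bt -> -1 < r < 1 -> Ifun bt 5 r = Iclosed bt r.
Proof.
  intros Hbt Hr. unfold Ifun, Iclosed, t_minus, t_plus.
  assert (hs0 : 0 < 1 - r^2) by nra.
  set (q := sqrt 5). set (s := sqrt (1 - r^2)).
  assert (hq : 0 < q) by (apply sqrt_lt_R0; lra).
  assert (hq2 : q^2 = 5) by (unfold q; apply pow2_sqrt; lra).
  assert (hs : 0 < s) by (apply sqrt_lt_R0; lra).
  assert (hs2 : s^2 = 1 - r^2) by (unfold s; apply pow2_sqrt; lra).
  set (tm := - q * r / s). set (tp := q * (bt - r) / s).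
  assert (Htmp : tm < tp).
  { unfold tm, tp. apply Rmult_lt_reg_r with s; auto. field_simplify; try lra. nra. }
  set (vf := fun t => s * t / q + r).
  set (Mf := fun v => (bt^2 + 1) - 2 * r * v).
  set (ef := fun v => 1 - 2 * r * v + v^2).
  set (K := cT * Kf * s^6).
  assert (HM : forall v, 0 <= v <= bt -> 0 < Mf v).
  { intros v Hv. unfold Mf. apply Rmult_lt_reg_l with bt; auto.
    replace (bt * (bt ^ 2 + 1 - 2 * r * v)) with ((bt - v) * (bt^2+1) + v * ((bt - r)^2 + (1 - r^2))) by ring.
    rewrite Rmult_0_r. assert (0 <= (bt - v) * (bt^2+1)) by nra.
    assert (0 < (bt-r)^2 + (1 - r^2)) by (pose proof (pow2_ge_0 (bt - r)); lra).
    destruct (Rle_lt_or_eq_dec 0 v ltac:(lra)) as [h|h]; [nra | subst; nra]. }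
  assert (Hv : forall t, tm <= t <= tp -> 0 <= vf t <= bt).
  { intros t [H1 H2]. unfold vf. unfold tm, tp in *. split.
    - apply Rmult_le_reg_r with q; auto. field_simplify; try lra.
      assert (s * (- q * r / s) <= s * t) by (apply Rmult_le_compat_l; lra).
      replace (s * (- q * r / s)) with (- q * r) in H by (field; repeat split; lra). nra.
    - apply Rmult_le_reg_r with q; auto. field_simplify; try lra.
      assert (s * t <= s * (q * (bt - r) / s)) by (apply Rmult_le_compat_l; lra).
      replace (s * (q * (bt - r) / s)) with (q * (bt - r)) in H by (field; repeat split; lra). nra. }
  apply defs_RInt_eq.
  apply is_RInt_ext with (fun t => K * (1 / (3 * Mf (vf t)^3) - ef (vf t) / (4 * Mf (vf t)^4))).
  - intros t Ht. rewrite Rmin_left in Ht by lra. rewrite Rmax_right in Ht by lra.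
    assert (Hvs : 0 < vf t < bt).
    { unfold vf. unfold tm, tp in Ht. destruct Ht as [H1 H2]. split.
      - apply Rmult_lt_reg_r with q; auto. field_simplify; try lra.
        assert (s * (- q * r / s) < s * t) by (apply Rmult_lt_compat_l; lra).
        replace (s * (- q * r / s)) with (- q * r) in H by (field; lra). nra.
      - apply Rmult_lt_reg_r with q; auto. field_simplify; try lra.
        assert (s * t < s * (q * (bt - r) / s)) by (apply Rmult_lt_compat_l; lra).
        replace (s * (q * (bt - r) / s)) with (q * (bt - r)) in H by (field; lra). nra. }
    set (v := vf t) in *.
    assert (ht : t = q * (v - r) / s) by (unfold v, vf; field; lra).
    assert (hef : ef v = s^2 + (v - r)^2) by (unfold ef; rewrite hs2; ring).
    assert (hefp : 0 < ef v) by (rewrite hef; pose proof (pow2_ge_0 (v - r)); nra).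
    assert (H1 : 1 + t^2/5 = ef v / s^2).
    { rewrite hef, ht, sq_lemma; auto. field. lra. }
    unfold Ffun, t_plus, t_minus. change (sqrt 5) with q. change (sqrt (1 - r^2)) with s.
    assert (H2 : (q * (bt - r) / s - - q * r / s) ^ 2 - (t - - q * r / s) ^ 2 = 5 * (bt^2 - v^2) / s^2).
    { replace (q * (bt - r) / s - - q * r / s) with (q * bt / s) by (field; lra).
      replace (t - - q * r / s) with (q * v / s) by (rewrite ht; field; lra).
      rewrite !sq_lemma; auto. field. lra. }
    rewrite H2.
    assert (H3 : (5 - 1) / (5 + 1) * (5 + t ^ 2) / (5 * (bt ^ 2 - v ^ 2) / s ^ 2) = 2/3 * ef v / (bt^2 - v^2)).
    { replace (5 + t^2) with (5 * (1 + t^2/5)) by field. rewrite H1. field. split; [nra|lra]. }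
    rewrite H3. rewrite PF_eq. 2: { apply Rdiv_lt_0_compat; [lra|]. nra. }
    rewrite pt_eq, H1. unfold Phi, Vf, K, Mf. match goal with |- ?a = ?b => change (@eq R a b) end. clearbody v. unfold ef in *. field.
    assert (bt ^ 2 + 1 - 2 * r * v = bt^2 - v^2 + ef v) by (unfold ef; ring).
    repeat split; try lra; nra.
  - set (T := fun t => K * (q / s) * (Pcoef (bt^2+1) r (vf t) / (Mf (vf t))^3)).
    replace (cT * Kf * q * s ^ 5 * Pcoef (bt ^ 2 + 1) r bt / (bt ^ 2 - 2 * r * bt + 1) ^ 3)
      with (T tp - T tm).
    + apply RIder.
      * intros t Ht. rewrite Rmin_left in Ht by lra. rewrite Rmax_right in Ht by lra.
        pose proof (Hv t Ht). pose proof (HM (vf t) H).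
        unfold T, Mf, ef, vf, Pcoef in *. auto_derive. nz. field.
        split; [lra|]. split.
        { replace ((bt ^ 2 + 1) * q - 2 * r * (s * t + r * q)) with (q * (bt^2+1 - 2*r*(s*t/q+r))) by (field; lra). nz. }
        split; [nra | lra].
      * intros t Ht. rewrite Rmin_left in Ht by lra. rewrite Rmax_right in Ht by lra.
        pose proof (Hv t Ht). pose proof (HM (vf t) H).
        apply exdc. unfold Mf, ef, vf in *. auto_derive. nz.
    + unfold T. assert (E1 : vf tp = bt) by (unfold vf, tp; field; repeat split; lra).
      assert (E2 : vf tm = 0) by (unfold vf, tm; field; repeat split; lra).
      rewrite E1, E2. unfold Pcoef, Mf, K. field. split; [nra|]. split; [|lra].
      replace (bt ^ 2 - 2 * r * bt + 1) with ((bt - r)^2 + (1 - r^2)) by ring.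
      pose proof (pow2_ge_0 (bt - r)). lra.
Qed.

Lemma Pcoef_sum bt r : 0 < bt -> 0 < bt^2 - 2*r*bt + 1 ->
  Pcoef (bt^2+1) r bt / (bt^2 - 2*r*bt + 1)^3 +
  Pcoef ((1/bt)^2+1) r (1/bt) / ((1/bt)^2 - 2*r*(1/bt) + 1)^3 =
  / 12 * (bt * (bt^2 - r*bt + 1) / (bt^2 - 2*r*bt + 1)^2).
Proof.
  intros Hb HQ. unfold Pcoef.
  assert (((1/bt)^2 - 2*r*(1/bt) + 1) = (bt^2 - 2*r*bt + 1) / bt^2) by (field; lra).
  rewrite H. field. repeat split; try lra; nra.
Qed.

Definition C0 (r : R) := cT * Kf * sqrt 5 * (sqrt (1 - r^2))^5 / 12.

Lemma C0_pos r : -1 < r < 1 -> 0 < C0 r.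
Proof.
  intros Hr. unfold C0. pose proof cT_pos. pose proof Kf_pos.
  assert (0 < sqrt 5) by (apply sqrt_lt_R0; lra).
  assert (0 < sqrt (1 - r^2)) by (apply sqrt_lt_R0; nra).
  assert (0 < sqrt (1 - r^2) ^ 5) by (apply pow_lt; lra).
  assert (0 < cT * Kf * sqrt 5 * sqrt (1 - r ^ 2) ^ 5) by (apply Rmult_lt_0_compat; [apply Rmult_lt_0_compat; [apply Rmult_lt_0_compat|]|]; auto).
  assert (0 < / 12) by lra. unfold Rdiv. apply Rmult_lt_0_compat; auto.
Qed.

Definition shape (r b : R) := Rabs b * (b^2 - r*b + 1) / (b^2 - 2*r*b + 1)^2.

Lemma sgn_cases b : b <> 0 -> (0 < b /\ sgn b = 1 /\ Rabs b = b) \/ (b < 0 /\ sgn b = -1 /\ Rabs b = - b).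
Proof.
  intros Hb. unfold sgn. destruct (Rlt_dec 0 b).
  - left. repeat split; auto. apply Rabs_pos_eq; lra.
  - destruct (Rlt_dec b 0); [|lra]. right. repeat split; auto. apply Rabs_left; auto.
Qed.

Lemma Jfun_eq r b : -1 < r < 1 -> b <> 0 -> Jfun b 5 r 1 = C0 r * shape r b.
Proof.
  intros Hr Hb. unfold Jfun.
  assert (Hr' : -1 < r * sgn b < 1 /\ (r * sgn b)^2 = r^2 /\ r * sgn b * Rabs b = r * b /\ Rabs b ^ 2 = b ^ 2 /\ 0 < Rabs b).
  { destruct (sgn_cases b Hb) as [[h1 [h2 h3]]|[h1 [h2 h3]]]; rewrite h2, h3; repeat split; try lra; try ring. }
  destruct Hr' as [H1 [H2 [H3 [H4 H5]]]].
  replace (Rabs b / 1) with (Rabs b) by field. 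
  rewrite !Ifun_eq; auto. 2: apply Rdiv_lt_0_compat; lra.
  unfold Iclosed, C0, shape. rewrite H2.
  set (rr := r * sgn b) in *. set (B := Rabs b) in *.
  assert (HQ : 0 < B^2 - 2*rr*B + 1).
  { replace (B^2 - 2*rr*B + 1) with ((B - rr)^2 + (1 - rr^2)) by ring. pose proof (pow2_ge_0 (B - rr)). nra. }
  pose proof (Pcoef_sum B rr H5 HQ).
  transitivity (cT * Kf * sqrt 5 * sqrt (1 - r ^ 2) ^ 5 *
     (Pcoef (B ^ 2 + 1) rr B / (B ^ 2 - 2 * rr * B + 1) ^ 3 +
      Pcoef ((1 / B) ^ 2 + 1) rr (1 / B) / ((1 / B) ^ 2 - 2 * rr * (1 / B) + 1) ^ 3)).
  { unfold Rdiv. ring. }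
  rewrite H. 
  replace (B * (B ^ 2 - rr * B + 1)) with (B * (b^2 - r * b + 1)) by nra.
  replace (B ^ 2 - 2 * rr * B + 1) with (b^2 - 2 * r * b + 1) by nra.
  unfold Rdiv. ring.
Qed.

Definition gg r b := b * (b^2 - r*b + 1) / ((1 + b^2) * (b^2 - 2*r*b + 1)^2).
Definition hh r b := gg r b + gg (-r) b.
Definition Wf r u := 1 - r^2 * (1 - u^2).
Definition Hval r := RInt (fun u => 1 / (Wf r u)^2) 0 1.

Lemma Q_pos r b : -1 < r < 1 -> 0 < b^2 - 2*r*b + 1.
Proof.
  intros Hr. pose proof (one_m_r2 r Hr).
  replace (b^2 - 2*r*b + 1) with ((b - r)^2 + (1 - r^2)) by ring.
  pose proof (pow2_ge_0 (b - r)). lra.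
Qed.

Lemma Q_ge r b : -1 < r < 1 -> 1 - r^2 <= b^2 - 2*r*b + 1.
Proof.
  intros Hr. replace (b^2 - 2*r*b + 1) with ((b - r)^2 + (1 - r^2)) by ring.
  pose proof (pow2_ge_0 (b - r)). lra.
Qed.

Lemma gg_cont r b : -1 < r < 1 -> continuous (gg r) b.
Proof.
  intros Hr. pose proof (Q_pos r b Hr). apply exdc. unfold gg. auto_derive.
  pose proof (pow2_ge_0 b). nz.
Qed.

Lemma hh_cont r b : -1 < r < 1 -> continuous (hh r) b.
Proof.
  intros Hr. assert (Hr' : -1 < -r < 1) by lra.
  pose proof (Q_pos r b Hr). pose proof (Q_pos (-r) b Hr'). apply exdc. unfold hh, gg. auto_derive.
  pose proof (pow2_ge_0 b). nz.
Qed.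

Lemma gg_inv r y : -1 < r < 1 -> 0 < y -> gg r (1/y) / y^2 = gg r y.
Proof.
  intros Hr Hy. pose proof (Q_pos r y Hr). unfold gg. field.
  pose proof (pow2_ge_0 y). repeat split; try lra; nra.
Qed.

Lemma hh_sub r b : -1 < r < 1 -> 0 <= b ->
  (-4*b/(1+b^2)^2) * (1 / (Wf r ((1 - b^2)/(1 + b^2)))^2) = - 2 * hh r b.
Proof.
  intros Hr Hb. assert (Hr' : -1 < -r < 1) by lra.
  pose proof (Q_pos r b Hr). pose proof (Q_pos (-r) b Hr').
  unfold hh, gg, Wf.
  assert (Wf r ((1 - b^2)/(1 + b^2)) = (b^2 - 2*r*b + 1) * (b^2 + 2*r*b + 1) / (1 + b^2)^2).
  { unfold Wf. field. pose proof (pow2_ge_0 b). lra. }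
  unfold Wf in H1. rewrite H1.
  field. pose proof (pow2_ge_0 b). repeat split; try lra; try nra.
Qed.

Lemma Wf_pos r u : -1 < r < 1 -> 0 < Wf r u.
Proof. intros Hr. pose proof (one_m_r2 r Hr). unfold Wf. pose proof (pow2_ge_0 u). pose proof (pow2_ge_0 r). nra. Qed.

Lemma hh_ex r a b : -1 < r < 1 -> ex_RInt (hh r) a b.
Proof. intros Hr. apply exRc. intros; apply hh_cont; auto. Qed.

Lemma Wex r a b : -1 < r < 1 -> ex_RInt (fun u => 1 / (Wf r u)^2) a b.
Proof.
  intros Hr. apply exRc. intros z _. apply exdc. pose proof (Wf_pos r z Hr). unfold Wf in *. auto_derive. nz.
Qed.

Lemma int_half r : -1 < r < 1 -> is_RInt (hh r) 0 1 (Hval r / 2).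
Proof.
  intros Hr.
  pose proof (RIcomp (fun u => 1 / (Wf r u)^2) (fun b => (1 - b^2)/(1 + b^2)) (fun b => -4*b/(1+b^2)^2) 0 1) as H.
  cbv beta in H.
  assert (E0 : (1 - 0^2)/(1 + 0^2) = 1) by field. assert (E1 : (1 - 1^2)/(1 + 1^2) = 0) by field.
  rewrite E0, E1 in H. clear E0 E1.
  assert (HR : RInt (fun u => 1 / (Wf r u)^2) 1 0 = - Hval r).
  { apply (is_RInt_unique (V := R_CompleteNormedModule)). apply RIswap. apply RIc. apply Wex; auto. }
  rewrite HR in H.
  assert (H2 : is_RInt (fun y => -4*y/(1+y^2)^2 * (1 / (Wf r ((1 - y^2)/(1 + y^2)))^2)) 0 1 (- Hval r)).
  { apply H.
    + intros x _. apply exdc. pose proof (Wf_pos r ((1 - x ^ 2) / (1 + x ^ 2)) Hr). unfold Wf in *. auto_derive. nz.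
    + intros x _. split.
      * auto_derive. pose proof (pow2_ge_0 x). nz. field. pose proof (pow2_ge_0 x). lra.
      * apply exdc. auto_derive. pose proof (pow2_ge_0 x). nz. }
  clear H.
  assert (H3 : is_RInt (fun y => -2 * hh r y) 0 1 (- Hval r)).
  { apply RIext with (2 := H2). intros x Hx. rewrite Rmin_left in Hx by lra. apply hh_sub; auto. lra. }
  pose proof (RIscal (hh r) 0 1 (-2) _ (RIc _ _ _ (hh_ex r 0 1 Hr))).
  pose proof (RIuniq _ _ _ _ _ H3 H).
  replace (Hval r / 2) with (RInt (hh r) 0 1) by lra.
  apply RIc. apply hh_ex; auto.
Qed.

Lemma int_inv r M : -1 < r < 1 -> 1 <= M -> is_RInt (hh r) 1 M (RInt (hh r) (1/M) 1).
Proof.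
  intros Hr HM.
  pose proof (RIcomp (hh r) (fun y => 1/y) (fun y => -1/y^2) (1/M) 1) as H. cbv beta in H.
  replace (1 / (1 / M)) with M in H by (field; lra). replace (1/1) with 1 in H by field.
  assert (H1 : 0 < 1 / M) by (apply Rdiv_lt_0_compat; lra).
  assert (H2 : 1 / M <= 1) by (apply Rmult_le_reg_r with M; [lra|]; field_simplify; lra).
  assert (H3 : is_RInt (fun y => -1 / y^2 * hh r (1 / y)) (1/M) 1 (RInt (hh r) M 1)).
  { apply H.
    - intros; apply hh_cont; auto.
    - intros x Hx. rewrite Rmin_left in Hx by lra. rewrite Rmax_right in Hx by lra. split.
      + auto_derive. lra. field. lra.
      + apply exdc. auto_derive. nz. }
  clear H.
  assert (H4 : is_RInt (fun y => -1 * hh r y) (1/M) 1 (RInt (hh r) M 1)).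
  { apply RIext with (2 := H3). intros x Hx. rewrite Rmin_left in Hx by lra. rewrite Rmax_right in Hx by lra.
    unfold hh. rewrite <- (gg_inv r x), <- (gg_inv (-r) x) by (auto; lra). field. lra. }
  pose proof (RIscal _ _ _ (-1) _ (RIc _ _ _ (hh_ex r (1/M) 1 Hr))) as H5.
  pose proof (RIuniq _ _ _ _ _ H4 H5) as H6.
  assert (H7 : RInt (hh r) 1 M = - RInt (hh r) M 1).
  { apply (is_RInt_unique (V := R_CompleteNormedModule)). apply RIswap. apply RIc. apply hh_ex; auto. }
  replace (RInt (hh r) (1 / M) 1) with (RInt (hh r) 1 M) by lra.
  apply RIc. apply hh_ex; auto.
Qed.

Definition Bh r := 6 / (1 - r^2)^2.

Lemma gg_bound r x : -1 < r < 1 -> 0 <= x <= 1 -> 0 <= gg r x <= 3 / (1 - r^2)^2.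
Proof.
  intros Hr Hx. pose proof (one_m_r2 r Hr). pose proof (Q_ge r x Hr).
  set (Q := x^2 - 2*r*x + 1) in *.
  assert (HN1 : 0 <= x^2 - r*x + 1) by nra.
  assert (HN2 : x * (x^2 - r*x + 1) <= 3) by nra.
  assert (HD : (1 - r^2)^2 <= (1 + x^2) * Q^2).
  { assert ((1 - r^2)^2 <= Q^2) by (apply pow_incr; lra). pose proof (pow2_ge_0 x).
    assert (0 <= Q^2) by apply pow2_ge_0. nra. }
  assert (0 < (1 - r^2)^2) by (apply pow_lt; lra).
  unfold gg. fold Q. split.
  - apply Rdiv_le_0_compat; [nra| lra].
  - unfold Rdiv. apply Rmult_le_compat; [nra| |lra|].
    + left. apply Rinv_0_lt_compat. lra.
    + apply Rinv_le_contravar; lra.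
Qed.

Lemma pCJ_pos r x : -1 < r < 1 -> 0 < x -> p_C x * Jfun x 5 r 1 = C0 r / PI * gg r x.
Proof.
  intros Hr Hx. rewrite Jfun_eq by (auto; lra). unfold p_C, shape, gg.
  rewrite Rabs_pos_eq by lra. pose proof PI_RGT_0. pose proof (Q_pos r x Hr).
  field. pose proof (pow2_ge_0 x). repeat split; lra.
Qed.

Lemma pCJ_neg r x : -1 < r < 1 -> x < 0 -> p_C x * Jfun x 5 r 1 = C0 r / PI * gg (-r) (- x).
Proof.
  intros Hr Hx. rewrite Jfun_eq by (auto; lra). unfold p_C, shape, gg.
  rewrite Rabs_left by lra. pose proof PI_RGT_0. pose proof (Q_pos r x Hr).
  replace ((- x)^2 - 2 * - r * - x + 1) with (x^2 - 2*r*x + 1) by ring.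
  field. pose proof (pow2_ge_0 x). repeat split; try lra.
Qed.

Lemma small_int r e : -1 < r < 1 -> 0 < e <= 1 -> Rabs (RInt (hh r) 0 e) <= e * Bh r.
Proof.
  intros Hr He. replace e with (e - 0) at 2 by ring. apply abs_RInt_le_const. lra. apply hh_ex; auto.
  intros t Ht. unfold hh, Bh. pose proof (gg_bound r t Hr ltac:(lra)). pose proof (gg_bound (-r) t ltac:(lra) ltac:(lra)).
  replace ((- r)^2) with (r^2) in H0 by ring.
  rewrite Rabs_pos_eq by lra. lra.
Qed.

Lemma improper_main r : -1 < r < 1 ->
  is_improper_R (fun x => p_C x * Jfun x 5 r 1) (C0 r / PI * Hval r).
Proof.
  intros Hr eps Heps. set (k := C0 r / PI).
  assert (Hk : 0 < k) by (unfold k; apply Rdiv_lt_0_compat; [apply C0_pos; auto| apply PI_RGT_0]).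
  assert (HB : 0 < Bh r) by (unfold Bh; pose proof (one_m_r2 r Hr); apply Rdiv_lt_0_compat; [lra| apply pow_lt; lra]).
  set (eta := eps / (2 * (k * Bh r + 1))).
  assert (Heta : 0 < eta) by (unfold eta; apply Rdiv_lt_0_compat; [lra| nra]).
  assert (Heta2 : k * Bh r * (2 * eta) < eps).
  { unfold eta. replace (k * Bh r * (2 * (eps / (2 * (k * Bh r + 1))))) with (eps * (k * Bh r / (k * Bh r + 1))) by (field; nra).
    assert (k * Bh r / (k * Bh r + 1) < 1) by (apply Rmult_lt_reg_r with (k * Bh r + 1); [nra|]; field_simplify; nra).
    nra. }
  exists (Rmin (1/2) eta), (Rmax 2 (1/eta)). split.
  { apply Rmin_pos; lra. }
  intros e M He HM.
  assert (He1 : e < 1/2) by (pose proof (Rmin_l (1/2) eta); lra).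
  assert (He2 : e < eta) by (pose proof (Rmin_r (1/2) eta); lra).
  assert (HM1 : 2 < M) by (pose proof (Rmax_l 2 (1/eta)); lra).
  assert (HM2 : 1 / eta < M) by (pose proof (Rmax_r 2 (1/eta)); lra).
  assert (HiM : 0 < 1 / M < eta).
  { split. apply Rdiv_lt_0_compat; lra.
    assert (0 < 1 / eta) by (apply Rdiv_lt_0_compat; lra).
    assert (/ M < / (1 / eta)) by (apply Rinv_lt_contravar; [apply Rmult_lt_0_compat|]; lra).
    replace (/ (1 / eta)) with eta in H0 by (field; lra). unfold Rdiv. lra. }
  exists (k * RInt (gg (-r)) e M), (k * RInt (gg r) e M). split; [|split].
  - apply bridge.
    assert (Hg : is_RInt (fun y => k * gg (-r) y) e M (k * RInt (gg (-r)) e M)).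
    { apply RIscal. apply RIc. apply exRc. intros; apply gg_cont; lra. }
    apply RIopp_sub in Hg. apply RIext with (2 := Hg).
    intros x Hx. rewrite Rmin_left in Hx by lra. rewrite Rmax_right in Hx by lra.
    rewrite pCJ_neg by (auto; lra). reflexivity.
  - apply bridge.
    assert (Hg : is_RInt (fun y => k * gg r y) e M (k * RInt (gg r) e M)).
    { apply RIscal. apply RIc. apply exRc. intros; apply gg_cont; lra. }
    apply RIext with (2 := Hg).
    intros x Hx. rewrite Rmin_left in Hx by lra. rewrite Rmax_right in Hx by lra.
    rewrite pCJ_pos by (auto; lra). reflexivity.
  - assert (Hsum : RInt (gg (-r)) e M + RInt (gg r) e M = RInt (hh r) e M).
    { apply RIuniq with (hh r) e M. 2: apply RIc; apply hh_ex; auto.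
      apply RIext with (fun y => gg (-r) y + gg r y). intros; unfold hh; ring.
      apply RIplus; apply RIc; apply exRc; intros; apply gg_cont; lra. }
    assert (HinvM := int_inv r M Hr ltac:(lra)).
    assert (Hsplit : RInt (hh r) e M = RInt (hh r) e 1 + RInt (hh r) (1/M) 1).
    { rewrite <- (RChasles (hh r) e 1 M) by (apply hh_ex; auto).
      f_equal. apply (is_RInt_unique (V := R_CompleteNormedModule)). exact HinvM. }
    assert (HH := int_half r Hr).
    assert (Hh1 : RInt (hh r) 0 1 = Hval r / 2) by (apply (is_RInt_unique (V := R_CompleteNormedModule)); exact HH).
    assert (Ha : RInt (hh r) 0 e + RInt (hh r) e 1 = Hval r / 2) by (rewrite RChasles by (apply hh_ex; auto); auto).
    assert (Hb : RInt (hh r) 0 (1/M) + RInt (hh r) (1/M) 1 = Hval r / 2) by (rewrite RChasles by (apply hh_ex; auto); auto).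
    assert (HiM1 : 1 / M <= 1) by (apply Rmult_le_reg_r with M; [lra|]; field_simplify; lra).
    pose proof (small_int r e Hr ltac:(lra)). pose proof (small_int r (1/M) Hr ltac:(lra)).
    replace (k * RInt (gg (- r)) e M + k * RInt (gg r) e M - k * Hval r)
      with (- k * (RInt (hh r) 0 e + RInt (hh r) 0 (1/M))).
    2: { assert (RInt (gg (- r)) e M + RInt (gg r) e M - Hval r = - (RInt (hh r) 0 e + RInt (hh r) 0 (1/M))) by lra.

         replace (RInt (hh r) 0 e + RInt (hh r) 0 (1/M)) with (- (RInt (gg (- r)) e M + RInt (gg r) e M - Hval r)) by lra. ring. }
    rewrite Rabs_mult, Rabs_Ropp, (Rabs_pos_eq k) by lra.
    eapply Rle_lt_trans; [|exact Heta2].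
    assert (Rabs (RInt (hh r) 0 e + RInt (hh r) 0 (1 / M)) <= Bh r * (2 * eta)).
    { eapply Rle_trans. apply Rabs_triang. nra. }
    replace (k * Bh r * (2 * eta)) with (k * (Bh r * (2 * eta))) by ring.
    apply Rmult_le_compat_l; lra.
Qed.

Lemma inv_n1 : is_lim_seq (fun n => / INR (S n)) 0.
Proof.
  assert (H : is_lim_seq (fun n => INR (S n)) p_infty).
  { apply (is_lim_seq_incr_1 INR p_infty). apply is_lim_seq_INR. }
  apply is_lim_seq_inv in H; [|discriminate]. simpl in H. exact H.
Qed.

Lemma nzn w : 0 < w < 1 -> is_lim_seq (fun n => INR (S n) * w^n) 0.
Proof.
  intros Hw.
  assert (Hnz : forall n, INR (S n) * w^n <> 0).
  { intros n. apply Rmult_integral_contrapositive_currified. apply not_0_INR; lia. apply pow_nonzero; lra. }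
  assert (Hl : is_lim_seq (fun n => Rabs (INR (S (S n)) * w^(S n) / (INR (S n) * w^n))) w).
  { apply is_lim_seq_ext with (fun n => w * (1 + / INR (S n))).
    - intros n. rewrite Rabs_pos_eq.
      + rewrite <- tech_pow_Rmult, !S_INR. field. pose proof (pos_INR n). split. apply pow_nonzero; lra. lra.
      + apply Rdiv_le_0_compat. apply Rmult_le_pos. apply pos_INR. apply pow_le; lra.
        apply Rmult_lt_0_compat. apply lt_0_INR; lia. apply pow_lt; lra.
    - assert (H : is_lim_seq (fun n => w * (1 + / INR (S n))) (w * (1 + 0))).
      { apply is_lim_seq_mult'. apply is_lim_seq_const.
        apply is_lim_seq_plus'. apply is_lim_seq_const. apply inv_n1. }
      rewrite Rplus_0_r, Rmult_1_r in H. exact H. }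
  pose proof (ex_series_DAlembert _ w ltac:(lra) Hnz Hl) as Hs.
  apply ex_series_lim_0 in Hs.
  apply is_lim_seq_ext with (2 := Hs). intros n. apply Rabs_pos_eq.
  apply Rmult_le_pos. apply pos_INR. apply pow_le; lra.
Qed.

Lemma nzn0 z : 0 <= z < 1 -> is_lim_seq (fun n => INR (S n) * z^n) 0.
Proof.
  intros Hz. set (w := (1 + z) / 2).
  apply is_lim_seq_le_le with (fun _ => 0) (fun n => INR (S n) * w^n).
  - intros n. split. apply Rmult_le_pos. apply pos_INR. apply pow_le; lra.
    apply Rmult_le_compat_l. apply pos_INR. apply pow_incr. unfold w; lra.
  - apply is_lim_seq_const.
  - apply nzn. unfold w; lra.
Qed.

Definition Jn n := RInt (fun u => (1 - u^2)^n) 0 1.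

Lemma Jn_ex n a b : ex_RInt (fun u => (1 - u^2)^n) a b.
Proof. apply exRc. intros z _. apply exdc. auto_derive. auto. Qed.

Lemma Jn_rec n : (2 * INR n + 3) * Jn (S n) = (2 * INR n + 2) * Jn n.
Proof.
  assert (H1 : is_RInt (fun u => (2 * INR n + 3) * (1 - u^2)^(S n) + (- (2 * INR n + 2)) * (1 - u^2)^n) 0 1
     ((2 * INR n + 3) * Jn (S n) + (- (2 * INR n + 2)) * Jn n)).
  { apply RIplus; apply RIscal; apply RIc; apply Jn_ex. }
  assert (H2 : is_RInt (fun u => (2 * INR n + 3) * (1 - u^2)^(S n) + (- (2 * INR n + 2)) * (1 - u^2)^n) 0 1
     ((fun u => u * (1 - u^2)^(S n)) 1 - (fun u => u * (1 - u^2)^(S n)) 0)).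
  { apply (RIder (fun u => u * (1 - u^2)^(S n))).
    - intros x _. auto_derive. auto. change (match n with | 0%nat => 1 | S _ => INR n + 1 end) with (INR (S n)). rewrite S_INR. simpl pow. toR. replace (1 - x * (x * 1)) with (1 + - (x * (x * 1))) by ring. set (P := (1 + - (x * (x * 1))) ^ n). ring.
    - intros x _. apply exdc. auto_derive. auto. }
  pose proof (RIuniq _ _ _ _ _ H1 H2). cbv beta in H.
  replace (1 - 1^2) with 0 in H by ring. rewrite pow_i in H by lia. lra.
Qed.

Definition an n := poch 2 n * poch 1 n / (poch (3/2) n * INR (Factorial.fact n)).

Lemma poch_pos a n : 0 < a -> 0 < poch a n.
Proof. intros Ha. induction n; simpl. lra. apply Rmult_lt_0_compat; auto. pose proof (pos_INR n). lra. Qed.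

Lemma an_eq n : an n = INR (S n) * Jn n.
Proof.
  induction n.
  - unfold an, Jn. simpl. rewrite RInt_const. unfold scal; simpl; unfold mult; simpl. field.
  - assert (E : an (S n) = an n * ((2 + INR n) * (1 + INR n)) / ((3/2 + INR n) * INR (S n))).
    { unfold an. simpl poch. change (Factorial.fact (S n)) with (S n * Factorial.fact n)%nat. rewrite mult_INR.
      pose proof (poch_pos (3/2) n ltac:(lra)). pose proof (INR_fact_lt_0 n).
      pose proof (pos_INR n). rewrite S_INR. field. repeat split; lra. }
    rewrite E, IHn. pose proof (Jn_rec n). pose proof (pos_INR n).
    rewrite !S_INR. 
    apply Rmult_eq_reg_r with ((3/2 + INR n) * (INR n + 1) * 2); [|nra].
    field_simplify; try lra. nra.
Qed.

Lemma term_int n z : is_RInt (fun u => INR (S n) * (z * (1 - u^2))^n) 0 1 (an n * z^n).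
Proof.
  rewrite an_eq. replace (INR (S n) * Jn n * z ^ n) with ((INR (S n) * z^n) * Jn n) by ring.
  apply RIext with (fun u => (INR (S n) * z^n) * (1 - u^2)^n).
  - intros x _. rewrite Rpow_mult_distr. ring.
  - apply RIscal. apply RIc. apply Jn_ex.
Qed.

Lemma psum_int N z : is_RInt (fun u => sum_f_R0 (fun n => INR (S n) * (z * (1 - u^2))^n) N) 0 1
  (sum_f_R0 (fun n => an n * z^n) N).
Proof.
  induction N.
  - exact (term_int 0 z).
  - rewrite tech5. eapply RIext. { intros x _. rewrite tech5. reflexivity. }
    apply RIplus; auto. apply term_int.
Qed.

Lemma psum_closed N x : sum_f_R0 (fun n => INR (S n) * x^n) N * (1 - x)^2 =
  1 - INR (S (S N)) * x^(S N) + INR (S N) * x^(S (S N)).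
Proof.
  induction N.
  - simpl. ring.
  - rewrite tech5. rewrite Rmult_plus_distr_r, IHN. rewrite !S_INR. simpl pow. ring.
Qed.

Lemma psum_err N x z : 0 <= x <= z -> z < 1 ->
  Rabs (sum_f_R0 (fun n => INR (S n) * x^n) N - 1 / (1 - x)^2) <= INR (S (S N)) * z^(S N) * 2 / (1 - z)^2.
Proof.
  intros Hx Hz. pose proof (psum_closed N x) as H.
  assert (H1 : 0 < 1 - x) by lra.
  assert (E : sum_f_R0 (fun n => INR (S n) * x^n) N - 1 / (1 - x)^2 =
              (- INR (S (S N)) * x^(S N) + INR (S N) * x^(S (S N))) / (1 - x)^2).
  { apply Rmult_eq_reg_r with ((1-x)^2). 2: { apply pow_nonzero; lra. }
    rewrite Rmult_minus_distr_r, H. field. lra. }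
  rewrite E. rewrite Rabs_div by (apply pow_nonzero; lra).
  rewrite (Rabs_pos_eq ((1 - x)^2)) by (apply pow_le; lra).
  assert (A1 : x^(S N) <= z^(S N)) by (apply pow_incr; lra).
  assert (A2 : x^(S (S N)) <= x^(S N)) by (rewrite <- (tech_pow_Rmult x (S N)); assert (0 <= x^(S N)) by (apply pow_le; lra); nra).
  assert (A3 : 0 <= x^(S (S N))) by (apply pow_le; lra).
  pose proof (pos_INR (S N)). pose proof (pos_INR (S (S N))).
  assert (A4 : INR (S N) <= INR (S (S N))) by (apply le_INR; lia).
  assert (Num : Rabs (- INR (S (S N)) * x ^ S N + INR (S N) * x ^ S (S N)) <= INR (S (S N)) * z^(S N) * 2).
  { eapply Rle_trans. apply Rabs_triang. rewrite Rabs_mult, Rabs_Ropp, Rabs_mult.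
    rewrite !Rabs_pos_eq by (try apply pow_le; lra). nra. }
  assert (D : (1 - z)^2 <= (1 - x)^2) by (apply pow_incr; lra).
  assert (0 < (1 - z)^2) by (apply pow_lt; lra).
  unfold Rdiv. apply Rmult_le_compat; try lra. apply Rabs_pos. left; apply Rinv_0_lt_compat; apply pow_lt; lra.
  apply Rinv_le_contravar; lra.
Qed.

Lemma hyp_sum r : -1 < r < 1 -> infinite_sum (fun n => an n * (r^2)^n) (Hval r).
Proof.
  intros Hr. set (z := r^2). pose proof (one_m_r2 r Hr).
  assert (Hz : 0 <= z < 1) by (unfold z; pose proof (pow2_ge_0 r); lra).
  assert (Err : forall N, Rabs (sum_f_R0 (fun n => an n * z^n) N - Hval r) <= INR (S (S N)) * z^(S N) * 2 / (1 - z)^2).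
  { intros N.
    assert (HI : is_RInt (fun u => sum_f_R0 (fun n => INR (S n) * (z * (1 - u^2))^n) N + (-1) * (1 / (Wf r u)^2)) 0 1
                   (sum_f_R0 (fun n => an n * z^n) N + (-1) * Hval r)).
    { apply RIplus. apply psum_int. apply RIscal. apply RIc. apply Wex; auto. }
    replace (sum_f_R0 (fun n => an n * z^n) N - Hval r) with (sum_f_R0 (fun n => an n * z^n) N + (-1) * Hval r) by ring.
    replace (INR (S (S N)) * z^(S N) * 2 / (1 - z)^2) with ((1 - 0) * (INR (S (S N)) * z^(S N) * 2 / (1 - z)^2)) by ring.
    apply RIabs_le with (3 := HI). lra.
    intros u Hu.
    assert (Hx : 0 <= z * (1 - u^2) <= z).
    { assert (0 <= u^2 <= 1) by (split; [apply pow2_ge_0| simpl; nra]). split; nra. }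
    assert (EW : Wf r u = 1 - z * (1 - u^2)) by (unfold Wf, z; ring).
    rewrite EW. replace (-1 * (1 / (1 - z * (1 - u ^ 2)) ^ 2)) with (- (1 / (1 - z * (1 - u ^ 2)) ^ 2)) by ring.
    apply psum_err; lra. }
  intros eps Heps.
  assert (He' : 0 < eps * (1 - z)^2 / 2) by (apply Rdiv_lt_0_compat; [apply Rmult_lt_0_compat; [lra| apply pow_lt; lra]| lra]).
  pose proof (nzn0 z Hz) as L. apply is_lim_seq_spec in L.
  destruct (L (mkposreal _ He')) as [N0 HN0]. simpl in HN0.
  exists N0. intros n Hn. unfold R_dist.
  eapply Rle_lt_trans. apply Err.
  specialize (HN0 (S n) ltac:(lia)). rewrite Rminus_0_r in HN0.
  rewrite Rabs_pos_eq in HN0 by (apply Rmult_le_pos; [pose proof (pos_INR (S n)); lra| apply pow_le; lra]).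
  rewrite (S_INR (S n)).
  assert (0 < (1 - z)^2) by (apply pow_lt; lra).
  apply Rmult_lt_reg_r with ((1 - z)^2); auto.
  replace ((INR (S n) + 1) * z ^ S n * 2 / (1 - z) ^ 2 * (1 - z) ^ 2) with ((INR (S n) + 1) * z ^ S n * 2) by (field; lra).
  simpl pow. simpl pow in HN0. lra.
Qed.

Lemma hyp_eq r : -1 < r < 1 -> hyp2F1 2 1 (3/2) (r^2) = Hval r.
Proof.
  intros Hr. unfold hyp2F1. apply the_val_eq.
  - apply hyp_sum; auto.
  - intros w Hw. eapply uniqueness_sum. exact Hw. apply hyp_sum; auto.
Qed.

Lemma improper_R_uniq f v1 v2 : is_improper_R f v1 -> is_improper_R f v2 -> v1 = v2.
Proof.
  intros H1 H2. apply Rminus_diag_uniq. apply eps_zero. intros eps Heps.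
  destruct (H1 (eps/2)) as [d1 [M1 [Hd1 K1]]]; [lra|].
  destruct (H2 (eps/2)) as [d2 [M2 [Hd2 K2]]]; [lra|].
  set (e := Rmin d1 d2 / 2). set (M := Rmax M1 M2 + 1).
  assert (He : 0 < Rmin d1 d2) by (apply Rmin_pos; auto).
  assert (e1 : 0 < e < d1) by (unfold e; split; [lra|]; pose proof (Rmin_l d1 d2); lra).
  assert (e2 : 0 < e < d2) by (unfold e; split; [lra|]; pose proof (Rmin_r d1 d2); lra).
  assert (m1 : M1 < M) by (unfold M; pose proof (Rmax_l M1 M2); lra).
  assert (m2 : M2 < M) by (unfold M; pose proof (Rmax_r M1 M2); lra).
  destruct (K1 e M e1 m1) as [w1 [w2 [I1 [I2 A1]]]]. destruct (K2 e M e2 m2) as [w1' [w2' [I1' [I2' A2]]]].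
  rewrite (defs_is_RInt_uniq _ _ _ _ _ I1 I1'), (defs_is_RInt_uniq _ _ _ _ _ I2 I2') in A1.
  replace (v1 - v2) with ((w1' + w2' - v2) - (w1' + w2' - v1)) by ring.
  eapply Rle_lt_trans. apply Rabs_triang. rewrite Rabs_Ropp. lra.
Qed.

Lemma Hval_pos r : -1 < r < 1 -> 1 <= Hval r.
Proof.
  intros Hr. unfold Hval.
  apply Rle_trans with (RInt (fun _ => 1) 0 1).
  - rewrite RInt_const. unfold scal; simpl; unfold mult; simpl. lra.
  - apply RInt_le. lra. apply ex_RInt_const. apply Wex; auto.
    intros x Hx. pose proof (Wf_pos r x Hr).
    assert (Wf r x <= 1) by (unfold Wf; pose proof (pow2_ge_0 r); assert (0 <= 1 - x^2) by (simpl; nra); nra).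
    assert (Wf r x ^ 2 <= 1) by (simpl; nra).
    assert (0 < Wf r x ^ 2) by (apply pow_lt; lra).
    apply Rmult_le_reg_r with (Wf r x ^ 2); auto. field_simplify; lra.
Qed.

Theorem mainTheorem9 (r : R) (hr : -1 < r < 1) :
  (exists Z, is_improper_R (fun x => p_C x * Jfun x 5 r 1) Z) /\
  forall b : R, b <> 0 ->
    posterior5 r b =
    / hyp2F1 2 1 (3 / 2) (r ^ 2) * (1 / (1 + b ^ 2)) *
    (Rabs b * (b ^ 2 - r * b + 1) / (b ^ 2 - 2 * r * b + 1) ^ 2).
Proof.
  split.
  - exists (C0 r / PI * Hval r). apply improper_main; auto.
  - intros b Hb. unfold posterior5.
    assert (EZ : the_val (is_improper_R (fun x => p_C x * Jfun x 5 r 1)) = C0 r / PI * Hval r).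
    { apply the_val_eq. apply improper_main; auto.
      intros w Hw. eapply improper_R_uniq. exact Hw. apply improper_main; auto. }
    rewrite EZ, Jfun_eq, hyp_eq by auto. unfold p_C, shape.
    pose proof (Hval_pos r hr). pose proof (C0_pos r hr). pose proof PI_RGT_0.
    pose proof (Q_pos r b hr). pose proof (pow2_ge_0 b).
    field. repeat split; try lra.
Qed.
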